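(* Consider the system $\dot{\boldsymbol{x}}(t)=-L(t)\boldsymbol{x}(t)$, $\boldsymbol{x}(t)\in\mathbb{R}^{dn}$, on a matrix-weighted switching network $\mathcal{G}(t)$ satisfying Assumption 2 (described in the context), with switching set $\{\mathcal{G}_1,\dots,\mathcal{G}_M\}$ and $L(\mathcal{G}_i)$ the matrix-valued Laplacian of $\mathcal{G}_i$. If $\lim_{t\to\infty}\boldsymbol{x}(t)=\boldsymbol{x}^*$, then $$\boldsymbol{x}^*\in\bigcap_{i=1}^{M}\mathrm{null}(L(\mathcal{G}_i)).$$ Moreover, $$\boldsymbol{x}^*=\sum_{i=1}^{r}(\boldsymbol{\eta}_i^\top\boldsymbol{x}(t_0))\boldsymbol{\eta}_i,$$ where $\boldsymbol{\eta}_1,\dots,\boldsymbol{\eta}_r\in\mathbb{R}^{dn}$ is an orthonormal basis of $\bigcap_{i=1}^{M}\mathrm{null}(L(\mathcal{G}_i))$ (i.e. $\mathrm{span}\{\boldsymbol{\eta}_1,\dots,\boldsymbol{\eta}_r\}$ equals this intersection and $\boldsymbol{\eta}_i^\top\boldsymbol{\eta}_j=1$ if $i=j$, $0$ otherwise).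
   Context: A matrix-weighted switching network $\mathcal{G}(t)=(\mathcal{V},\mathcal{E}(t),A(t))$ has node set $\mathcal{V}=\{1,\dots,n\}$, $n>1$; each edge $(i,j)\in\mathcal{E}(t)$ carries a symmetric weight $A_{ij}(t)\in\mathbb{R}^{d\times d}$ which is either positive (semi-)definite or negative (semi-)definite, with $A_{ij}=A_{ji}$, $A_{ii}=0$, and $A_{ij}(t)=0$ if $(i,j)\notin\mathcal{E}(t)$. Set $|A_{ij}|=A_{ij}$ if $A_{ij}\succeq0$ and $-A_{ij}$ if $A_{ij}\preceq0$. With $A=[A_{ij}]\in\mathbb{R}^{dn\times dn}$ and $D=\mathrm{diag}(D_1,\dots,D_n)$, $D_i=\sum_{j:(i,j)\in\mathcal{E}}|A_{ij}|$, the matrix-valued Laplacian is $L=D-A$; the system $\dot{\boldsymbol{x}}=-L(t)\boldsymbol{x}$ is the stacked form of $\dot{\boldsymbol{x}}_i=-\sum_{j}|A_{ij}|(\boldsymbol{x}_i-\mathrm{sgn}(A_{ij})\boldsymbol{x}_j)$, where $\mathrm{sgn}(A)$ is $1$, $-1$, $0$ for nonzero PSD, nonzero NSD, zero $A$ respectively. The initial time is $t_0=0$. Assumption 1: there is a sequence $\{t_k\}_{k\in\mathbb{N}}$ with $t_0=0$, $t_k\to\infty$, $t_{k+1}-t_k\ge\alpha>0$, and $\mathcal{G}(t)$ is constant on each $[t_k,t_{k+1})$. Assumption 2: Assumption 1 holds, and $\mathcal{G}(t)$ is always chosen from a finite set $\{\mathcal{G}_1,\dots,\mathcal{G}_M\}$,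 each $\mathcal{G}_i$ appearing infinitely many times in the sequence. *)

(* Defs.v *)
From HB Require Import structures.
From mathcomp Require Import all_boot all_order all_algebra.
From mathcomp Require Import all_classical all_reals all_analysis.
Set Implicit Arguments. Unset Strict Implicit. Unset Printing Implicit Defensive.
Import Order.TTheory GRing.Theory Num.Theory.
Import numFieldNormedType.Exports.
Local Open Scope ring_scope.

Definition psd (R : realType) (d : nat) (A : 'M[R]_d) : Prop :=
  forall v : 'cV[R]_d, 0 <= (v^T *m A *m v) ord0 ord0.
Definition nsd (R : realType) (d : nat) (A : 'M[R]_d) : Prop :=
  forall v : 'cV[R]_d, (v^T *m A *m v) ord0 ord0 <= 0.

Definition mxabs (R : realType) (d : nat) (A : 'M[R]_d) : 'M[R]_d :=
  if `[< psd A >] then A else - A.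

(* A matrix-weighted graph on n nodes with d x d weights, given by its
   weight function W i j = A_ij (A_ij = 0 iff (i,j) is not an edge, or the
   edge carries the zero weight; in both cases it contributes nothing). *)
Definition mw_graph (R : realType) (n d : nat)
    (W : 'I_n -> 'I_n -> 'M[R]_d) : Prop :=
  [/\ forall i, W i i = 0,
      forall i j, W i j = W j i,
      forall i j, (W i j)^T = W i j &
      forall i j, psd (W i j) \/ nsd (W i j)].

(* Block indexing of R^{dn}: global index k <-> (node k %/ d, component k %% d). *)
Lemma blk_node_lt (n d k : nat) : (k < n * d -> k %/ d < n)%N.
Proof. by case: d => [|d]; [rewrite muln0 | rewrite ltn_divLR]. Qed.
Lemma blk_comp_lt (n d k : nat) : (k < n * d -> k %% d < d)%N.
Proof. by case: d => [|d]; [rewrite muln0 | rewrite ltn_pmod]. Qed.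
Definition blk_node (n d : nat) (k : 'I_(n * d)) : 'I_n :=
  Ordinal (blk_node_lt (ltn_ord k)).
Definition blk_comp (n d : nat) (k : 'I_(n * d)) : 'I_d :=
  Ordinal (blk_comp_lt (ltn_ord k)).

Definition blockmx (R : realType) (n d : nat) (B : 'I_n -> 'I_n -> 'M[R]_d)
    : 'M[R]_(n * d) :=
  \matrix_(k, l) B (blk_node k) (blk_node l) (blk_comp k) (blk_comp l).

(* Matrix-valued Laplacian L = D - A, D = diag(D_i), D_i = sum_j |A_ij|. *)
Definition mw_laplacian (R : realType) (n d : nat)
    (W : 'I_n -> 'I_n -> 'M[R]_d) : 'M[R]_(n * d) :=
  blockmx (fun i j => (i == j)%:R *: (\sum_(l < n) mxabs (W i l)) - W i j).

(* Main.v *)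
Require Import Defs.
From HB Require Import structures.
From mathcomp Require Import all_boot all_order all_algebra.
From mathcomp Require Import all_classical all_reals all_analysis.
From mathcomp Require Import ring lra.
Import Order.TTheory GRing.Theory Num.Theory.
Import numFieldNormedType.Exports.
Local Open Scope ring_scope.
Local Open Scope classical_set_scope.




Lemma phiE {R : realType} {p} (u v : 'cV[R]_p) : (u^T *m v) ord0 ord0 = \sum_k u k ord0 * v k ord0.
Proof. by rewrite !mxE; apply: eq_bigr => k _; rewrite mxE. Qed.

Lemma phi_cont {R : realType} {p} (u : 'cV[R]_p) : continuous (fun v : 'cV[R]_p => (u^T *m v) ord0 ord0).
Proof.
have -> : (fun v : 'cV[R]_p => (u^T *m v) ord0 ord0) =
  (fun v => \sum_(k <- index_enum 'I_p) u k ord0 * v k ord0).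
  by apply: funext => v; rewrite phiE.
elim: (index_enum _) => [|k s IH] v.
  have -> : (fun v : 'cV[R]_p => \sum_(k <- [::]) u k ord0 * v k ord0) = fun=> 0.
    by apply: funext => w; rewrite big_nil.
  exact: cst_continuous.
have -> : (fun v : 'cV[R]_p => \sum_(j <- k :: s) u j ord0 * v j ord0) =
   (fun v => u k ord0 * v k ord0 + \sum_(j <- s) u j ord0 * v j ord0).
  by apply: funext => w; rewrite big_cons.
apply: (@continuousD _ _ _ (fun w : 'cV[R]_p => u k ord0 * w k ord0)
  (fun w => \sum_(j <- s) u j ord0 * w j ord0)); last exact: IH.
apply: (@continuousM _ _ (fun=> u k ord0) (fun w : 'cV[R]_p => w k ord0)).
  exact: cst_continuous.
exact: coord_continuous.
Qed.

Lemma phi_derive {R : realType} {p} (u : 'cV[R]_p) (y : R -> 'cV[R]_p) (t : R) (y' : 'cV[R]_p) :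
  is_derive t 1 y y' ->
  is_derive t 1 (fun s => (u^T *m y s) ord0 ord0) ((u^T *m y') ord0 ord0).
Proof.
move=> hd.
have hder : derivable y t 1 by case: hd.
have hy' : y' = 'D_1 y t by case: hd => _ ->.
have hc k : is_derive t 1 (fun s => y s k ord0) (y' k ord0).
  have := (derivable_mxP y t 1).1 hder k ord0 => dk.
  by rewrite hy' derive_mx // mxE; apply: derivableP.
have -> : (fun s => (u^T *m y s) ord0 ord0) = \sum_k (fun s => u k ord0 * y s k ord0).
  by apply: funext => s; rewrite phiE fct_sumE.
rewrite phiE.
exact: is_derive_sum.
Qed.

Lemma within_phi (R : realType) p (u : 'cV[R]_p) (x : R -> 'cV[R]_p) (A : set R) :
  {within A, continuous x} -> {within A, continuous (fun t => (u^T *m x t) ord0 ord0)}.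
Proof.
move=> hx.
have := @within_continuous_comp _ _ _ A x (fun v : 'cV[R]_p => (u^T *m v) ord0 ord0) (fun v _ => @phi_cont _ _ u v) hx.
by [].
Qed.


Lemma mxabs_sym (R : realType) d (A : 'M[R]_d) : A^T = A -> (mxabs A)^T = mxabs A.
Proof. by move=> hA; rewrite /mxabs; case: ifP => _; rewrite ?linearN /= hA. Qed.

Lemma lap_sym (R : realType) n d (W : 'I_n -> 'I_n -> 'M[R]_d) :
  mw_graph W -> (mw_laplacian W)^T = mw_laplacian W.
Proof.
case=> _ hsym htr _.
have hW i j a b : W i j a b = W j i b a.
  by rewrite -[in LHS]htr mxE hsym.
have hA i l a b : mxabs (W i l) a b = mxabs (W i l) b a.
  by rewrite -[in LHS]mxabs_sym ?htr // mxE.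
apply/matrixP => k l.
rewrite /mw_laplacian /blockmx !mxE !summxE eq_sym hW.
case: eqP => [->|_]; last by rewrite !mul0r.
by congr (_ * _ - _); apply: eq_bigr => j _; rewrite hA.
Qed.

Theorem theorem5 (R : realType) (n d M : nat) (hn : (1 < n)%N)
    (Gs : 'I_M -> 'I_n -> 'I_n -> 'M[R]_d)
    (hGs : forall m, mw_graph (Gs m))
    (tk : nat -> R) (alpha : R) (sigma : nat -> 'I_M)
    (ht0 : tk 0%N = 0) (halpha : 0 < alpha)
    (hdwell : forall k, tk k + alpha <= tk k.+1)
    (htinf : tk @ \oo --> +oo)
    (hinf : forall (m : 'I_M) (N : nat), exists2 k, (N <= k)%N & sigma k = m)
    (x : R -> 'cV[R]_(n * d))
    (hcont : {within `[0, +oo[, continuous x})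
    (hode : forall k t, tk k < t < tk k.+1 ->
       is_derive t (1 : R) x (- (mw_laplacian (Gs (sigma k)) *m x t)))
    (xstar : 'cV[R]_(n * d))
    (hlim : x t @[t --> +oo] --> xstar) :
  (forall m, mw_laplacian (Gs m) *m xstar = 0) /\
  (forall (r : nat) (eta : 'I_r -> 'cV[R]_(n * d)),
     (forall i j, ((eta i)^T *m eta j) ord0 ord0 = (i == j)%:R) ->
     (forall v : 'cV[R]_(n * d),
        (forall m, mw_laplacian (Gs m) *m v = 0) <->
        exists c : 'I_r -> R, v = \sum_(i < r) c i *: eta i) ->
     xstar = \sum_(i < r) ((eta i)^T *m x 0) ord0 ord0 *: eta i).

Proof.
have hpos k : 0 <= tk k.
  elim: k => [|k IH]; first by rewrite ht0.
  by apply: le_trans (hdwell k); rewrite (le_trans IH) // lerDl ltW.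
have hlt k : tk k < tk k.+1.
  by apply: lt_le_trans (hdwell k); rewrite ltrDl.
have hsymid m (u v : 'cV[R]_(n * d)) :
    (u^T *m (mw_laplacian (Gs m) *m v)) ord0 ord0 =
    ((mw_laplacian (Gs m) *m u)^T *m v) ord0 ord0.
  by rewrite trmx_mul lap_sym // mulmxA.
have hfcvg (u : 'cV[R]_(n * d)) :
    (fun t => (u^T *m x t) ord0 ord0) @ +oo --> (u^T *m xstar) ord0 ord0.
  exact: (cvg_comp _ _ hlim (@phi_cont _ _ u xstar)).
have part1 : forall m, mw_laplacian (Gs m) *m xstar = 0.
  move=> m.
  set L := mw_laplacian (Gs m).
  set u := L *m xstar.
  set s := (u^T *m u) ord0 ord0.
  have hs : s = \sum_k u k ord0 ^+ 2.
    by rewrite /s phiE; apply: eq_bigr => k _; rewrite expr2.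
  have s_ge0 : 0 <= s by rewrite hs sumr_ge0 // => k _; rewrite sqr_ge0.
  suff s0 : s = 0.
    apply/matrixP => k j; rewrite (ord1 j) [RHS]mxE.
    have := psumr_eq0P (P := xpredT) (fun k _ => sqr_ge0 (u k ord0)) (etrans (esym hs) s0) (i := k) isT.
    by move/eqP; rewrite sqrf_eq0 => /eqP.
  apply/eqP; rewrite eq_le s_ge0 andbT; apply/negP => /negP; rewrite -ltNge => s_gt0.
  pose a := (u^T *m xstar) ord0 ord0.
  pose f := fun t => (u^T *m x t) ord0 ord0.
  pose g := fun t => ((L *m u)^T *m x t) ord0 ord0.
  have hs' : s = ((L *m u)^T *m xstar) ord0 ord0 by rewrite -hsymid.
  have hg : g @ +oo --> s by rewrite hs'; exact: hfcvg.
  have e1 : 0 < alpha * s / 4 by rewrite divr_gt0 // mulr_gt0.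
  have e2 : 0 < s / 2 by rewrite divr_gt0.
  have := (cvgrPdist_lt _ _).1 (hfcvg u) _ e1.
  have := (cvgrPdist_lt _ _).1 hg _ e2.
  have FF : Filter (+oo : set_system R) by exact: _.
  move=> /(_ FF) H1 /(_ FF) H2.
  case: (filterI H1 H2) => M0 [M0r HM0].
  have := (cvgryPgt _).1 htinf M0.
  case=> N _ HN.
  case: (hinf m N) => k hNk hsk.
  have hMk : M0 < tk k := HN k hNk.
  have hab : tk k < tk k + alpha by rewrite ltrDl.
  have hder t : t \in `]tk k, tk k + alpha[%R -> is_derive t 1 f (- g t).
    rewrite in_itv /= => /andP[h1 h2].
    have := hode k t; rewrite hsk h1 (lt_le_trans h2 (hdwell k)) => /(_ isT) hd.
    apply: is_derive_eq (@phi_derive _ _ u _ _ _ hd) _.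
    by rewrite mulmxN mxE hsymid.
  have hc : {within `[tk k, tk k + alpha], continuous f}.
    apply: within_phi; apply: continuous_subspaceW hcont => t /=.
    rewrite !in_itv /= => /andP[h1 h2]; rewrite (le_trans (hpos k) h1) //.
  have [c hcin hmvt] := MVT hab hder hc.
  move: hcin; rewrite in_itv /= => /andP[hc1 hc2].
  have [Hgc _] := HM0 c (lt_trans hMk hc1).
  have [_ Hfa] := HM0 (tk k) hMk.
  have [_ Hfb] := HM0 (tk k + alpha) (lt_trans hMk hab).
  move: Hgc Hfa Hfb hmvt; rewrite -/(g c) -/(f (tk k)) -/(f (tk k + alpha)) -/a.
  rewrite addrAC subrr add0r.
  move: (g c) (f (tk k)) (f (tk k + alpha)) => G Fa Fb.
  rewrite !ltr_norml => /andP[h1 h2] /andP[h3 h4] /andP[h5 h6] h7.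
  have hGa : s / 2 * alpha < G * alpha by rewrite ltr_pM2r //; lra.
  have hP : s / 2 * alpha = 2 * (alpha * s / 4) by field.
  move: hGa h7 h3 h4 h5 h6; rewrite hP mulNr.
  move: (G * alpha) (alpha * s / 4) => Ga P.
  lra.
split => // r eta horth hspan.
have heta i m : mw_laplacian (Gs m) *m eta i = 0.
  apply: (proj2 (hspan (eta i))); exists (fun j => (i == j)%:R).
  rewrite (bigD1 i) //= eqxx scale1r big1 ?addr0 // => j hj.
  by rewrite eq_sym (negbTE hj) scale0r.
have hconst i k : ((eta i)^T *m x (tk k)) ord0 ord0 = ((eta i)^T *m x 0) ord0 ord0.
  elim: k => [|k IH]; first by rewrite ht0.
  rewrite -IH.
  have hder t : t \in `]tk k, tk k.+1[%R ->
      is_derive t 1 (fun t => ((eta i)^T *m x t) ord0 ord0) 0.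
    move=> ht; rewrite in_itv /= in ht.
    have hd := hode k t ht.
    apply: is_derive_eq (@phi_derive _ _ (eta i) _ _ _ hd) _.
    by rewrite mulmxN mxE hsymid heta trmx0 mul0mx mxE oppr0.
  have hc : {within `[tk k, tk k.+1], continuous (fun t => ((eta i)^T *m x t) ord0 ord0)}.
    apply: within_phi; apply: continuous_subspaceW hcont => t /=.
    rewrite !in_itv /= => /andP[h1 h2]; rewrite (le_trans (hpos k) h1) //.
  have [c _ h] := MVT (hlt k) hder hc.
  by move: h; rewrite mul0r => /eqP; rewrite subr_eq0 => /eqP.
have hlimi i : ((eta i)^T *m xstar) ord0 ord0 = ((eta i)^T *m x 0) ord0 ord0.
  have h1 := cvg_comp _ _ htinf (hfcvg (eta i)).
  have e : (fun t => ((eta i)^T *m x t) ord0 ord0) \o tk = fun=> ((eta i)^T *m x 0) ord0 ord0.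
    by apply: funext => k /=; rewrite hconst.
  rewrite e in h1.
  exact: (cvg_unique _ h1 (cvg_cst _)).
have [c hc] := (hspan xstar).1 part1.
rewrite {1}hc; apply: eq_bigr => i _; congr (_ *: _).
rewrite -hlimi hc mulmx_sumr summxE (bigD1 i) //= big1 ?addr0.
  by rewrite -scalemxAr mxE horth eqxx mulr1.
move=> j hj; rewrite -scalemxAr mxE horth eq_sym (negbTE hj) mulr0 //.
Qed.
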